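(* Let $Y_1,Y_2,\ldots$ be i.i.d. Bernoulli$(1/2)$ and let $(Z^k)_k$ be generated by the bit-drop scheme described in the context, independently of $(Y_i)$; let $L^a(k)=L^a_n(k)$ be the length of a longest common subsequence of $Z^k$ and $Y_1\ldots Y_n$. Let $\gamma>0$, let $k$ satisfy $0.45n\le k<n$, let $\sigma_k:=\sigma(Z^k_i,Y_j: i\le k,\ j\le n)$, and let $E^n_{2k}$ be the event that every $(\pi,\eta)\in M^k$ has more than $\gamma n$ non-empty matches. Then on the event $E^n_{2k}$, $$P\big(L^a(k+1)-L^a(k)=1\,\big|\,\sigma_k\big)\geq 0.5\gamma.$$
   Context: Bit-drop scheme: let $V_1,V_2,\ldots$ be i.i.d. Bernoulli$(1/2)$ and let $T_3,T_4,\ldots$ be independent, independent of $(V_k)$, with $T_{k+1}$ uniform on $\{2,\ldots,k\}$. Set $Z^2:=V_1V_2$ and, given $Z^k=Z^k_1\ldots Z^k_k$, define $Z^{k+1}_j:=Z^k_j$ for $j<T_{k+1}$, $Z^{k+1}_{T_{k+1}}:=V_{k+1}$, $Z^{k+1}_j:=Z^k_{j-1}$ for $T_{k+1}<j\le k+1$. A pair of matching subsequences of $Z^k$ and $Y_1\ldots Y_n$ of length $m$ is a pair $(\pi,\eta)$ of strictly increasing maps $\pi:\{1,\ldots,m\}\to\{1,\ldots,k\}$, $\eta:\{1,\ldots,m\}\to\{1,\ldots,n\}$ with $Z^k_{\pi(i)}=Y_{\eta(i)}$ for all $i$. $M^k_2$ is the set of such pairs of maximal length; pairs are ordered componentwise,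 and $M^k$ is the set of minimal elements of $M^k_2$. For $1\le i\le m-1$, $(\pi(i),\pi(i+1),\eta(i),\eta(i+1))$ is a match of $(\pi,\eta)$; it is non-empty if $\eta(i)+2\le\eta(i+1)$. *)

(* Defs.v *)
From HB Require Import structures.
From mathcomp Require Import all_boot all_order all_algebra.
Set Implicit Arguments. Unset Strict Implicit. Unset Printing Implicit Defensive.
Import Order.TTheory GRing.Theory Num.Theory.

Definition lcs (a b : seq bool) : nat :=
  \max_(m : (size a).-tuple bool | subseq (mask m a) b) size (mask m a).

(* ---------- Matching subsequences (1-based indices, as in the paper) ---------- *)
(* (p, q) encodes (pi, eta): p = [pi(1); ...; pi(m)], q = [eta(1); ...; eta(m)] *)
Definition matching (z y : seq bool) (p q : seq nat) : Prop :=
  [/\ size p = size q, sorted ltn p, sorted ltn q,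
      all (fun i => 0 < i <= size z) p & all (fun j => 0 < j <= size y) q] /\
      (forall i, i < size p -> nth false z (nth 0 p i).-1 = nth false y (nth 0 q i).-1).

Definition M2 (z y : seq bool) (p q : seq nat) : Prop :=
  matching z y p q /\ size p = lcs z y.

Definition pair_le (p q p' q' : seq nat) : Prop :=
  size p = size p' /\ size q = size q' /\
  forall i, i < size p -> nth 0 p i <= nth 0 p' i /\ nth 0 q i <= nth 0 q' i.

Definition Mmin (z y : seq bool) (p q : seq nat) : Prop :=
  M2 z y p q /\
  forall p' q', M2 z y p' q' -> pair_le p' q' p q -> p' = p /\ q' = q.

Definition nonempty_matches (q : seq nat) : nat :=
  count (fun i => (nth 0 q i).+2 <= nth 0 q i.+1) (iota 0 (size q).-1).

(* the event E^n_{2k}, as a property of (Z^k, Y) *)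
Definition Eevent {R : realFieldType} (gamma : R) (n : nat) (z y : seq bool) : Prop :=
  forall p q, Mmin z y p q -> (gamma * n%:R < (nonempty_matches q)%:R)%R.

(* insert bit b at (1-based) position t *)
Definition ins (z : seq bool) (t : nat) (b : bool) : seq bool :=
  take t.-1 z ++ b :: drop t.-1 z.

(* Zrec v t m = Z^(m+2), where v i = V_i and t j = T_j *)
Fixpoint Zrec (v : nat -> bool) (t : nat -> nat) (m : nat) : seq bool :=
  match m with
  | 0 => [:: v 1; v 2]
  | m'.+1 => ins (Zrec v t m') (t m'.+3) (v m'.+3)
  end.

(* Finite sample space carrying (V_1..V_{k+1}, T_3..T_{k+1}, Y_1..Y_n),
   equipped with the uniform probability (= product of the uniform laws).
   The T-coordinate indexed by i : 'I_(k-1) stores T_{i+3} - 2 in 'I_(i+1),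
   i.e. T_{i+3} is uniform on {2, ..., i+2}. *)
Definition Omega (k n : nat) : finType :=
  ((k.+1).-tuple bool * {dffun forall i : 'I_(k.-1), 'I_(i.+1)} * n.-tuple bool)%type.

Definition Vof (k n : nat) (w : Omega k n) (i : nat) : bool := nth false (tval w.1.1) i.-1.

Definition Tof (k n : nat) (w : Omega k n) (j : nat) : nat :=
  match (insub (j - 3) : option 'I_(k.-1)) with
  | Some i => (val (w.1.2 i)).+2
  | None => 2
  end.

(* Z^j for j >= 2 *)
Definition Zof (k n : nat) (w : Omega k n) (j : nat) : seq bool :=
  Zrec (Vof w) (Tof w) (j - 2).

Definition Yof (k n : nat) (w : Omega k n) : seq bool := tval w.2.

Definition La (k n : nat) (w : Omega k n) (j : nat) : nat := lcs (Zof w j) (Yof w).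

Definition Prob {R : realFieldType} (k n : nat) (A : pred (Omega k n)) : R :=
  (#|A|%:R / #|Omega k n|%:R)%R.

(* Main.v *)
Require Import Defs.
From HB Require Import structures.
From mathcomp Require Import all_boot all_order all_algebra zify.
From mathcomp Require Import ring lra.
From Stdlib Require Import Classical.
Set Implicit Arguments. Unset Strict Implicit. Unset Printing Implicit Defensive.

Ltac fsz := repeat match goal with
  | |- context [@size (Equality.sort ?E) ?s] =>
      let T' := eval hnf in (Equality.sort E) in change (@size (Equality.sort E) s) with (@size T' s)
  | H : context [@size (Equality.sort ?E) ?s] |- _ =>
      let T' := eval hnf in (Equality.sort E) in change (@size (Equality.sort E) s) with (@size T' s) in H
  end.

Lemma lcs_ge (a b s : seq bool) : subseq s a -> subseq s b -> size s <= lcs a b.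
Proof.
move=> /subseqP [m Hm ->] Hb.
rewrite /lcs.
have Hm' : size m == size a by apply/eqP.
exact: (leq_bigmax_cond (Tuple Hm') Hb).
Qed.

Lemma lcs_attained (a b : seq bool) :
  exists s, [/\ subseq s a, subseq s b & size s = lcs a b].
Proof.
rewrite /lcs.
have H0 : 0 < #|[pred m : (size a).-tuple bool | subseq (mask m a) b]|.
  apply/card_gt0P; exists (nseq_tuple (size a) false).
  by rewrite inE /= mask_false sub0seq.
have [m Hm ->] := eq_bigmax_cond (fun m : (size a).-tuple bool => size (mask m a)) H0.
exists (mask m a); split => //; exact: mask_subseq.
Qed.

Lemma lcs_le (a b : seq bool) N :
  (forall s, subseq s a -> subseq s b -> size s <= N) -> lcs a b <= N.
Proof.
move=> H; have [s [H1 H2 <-]] := lcs_attained a b; exact: H.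
Qed.

Lemma subseq_drop1 (T : eqType) (s z1 z2 : seq T) x :
  subseq s (z1 ++ x :: z2) ->
  exists s', [/\ subseq s' (z1 ++ z2), subseq s' s & size s <= (size s').+1].
Proof.
move=> /subseqP [m Hm ->].
rewrite -[m](cat_take_drop (size z1)) mask_cat; last by rewrite size_take_min; move: Hm; rewrite size_cat /=; lia.
have : size (drop (size z1) m) = (size z2).+1 by rewrite size_drop Hm size_cat /=; lia.
case: (drop (size z1) m) => [//|c m3] /= [Hm3].
exists (mask (take (size z1) m) z1 ++ mask m3 z2); split.
- by apply: cat_subseq; apply: mask_subseq.
- apply: cat_subseq; first exact: subseq_refl.
  by case: c => //; apply: (subseq_trans _ (suffix_subseq [:: x] _)); exact: subseq_refl.
- by rewrite !size_cat; case: c => /=; lia.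
Qed.

Lemma lcs_ins_le (z y : seq bool) t b : lcs (ins z t b) y <= (lcs z y).+1.
Proof.
apply: lcs_le => s Hs Hy; rewrite /ins in Hs.
have [s' [H1 H2 H3]] := subseq_drop1 Hs.
rewrite cat_take_drop in H1.
apply: (leq_trans H3); rewrite ltnS; apply: lcs_ge => //.
exact: subseq_trans H2 Hy.
Qed.


Lemma idx_subseq (T : eqType) (x0 : T) z lo l :
  sorted ltn l -> all (fun i => lo < i <= size z) l ->
  subseq (map (fun j => nth x0 z j.-1) l) (drop lo z).
Proof.
elim: l lo => [|i l IH] lo /=; first by rewrite sub0seq.
move=> Hp /andP [/andP [Hlo Hi] Hall].
rewrite -(cat_take_drop (i.-1 - lo) (drop lo z)) drop_drop.
have -> : i.-1 - lo + lo = i.-1 by lia.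
apply: (subseq_trans _ (suffix_subseq _ _)).
rewrite (drop_nth x0); last by lia.
rewrite /= eqxx.
have -> : i.-1.+1 = i by lia.
apply: IH; first exact: (path_sorted Hp).
have Hm := order_path_min ltn_trans Hp.
apply/allP => j Hj; rewrite (allP Hm j Hj) /=.
by have := allP Hall j Hj => /andP [].
Qed.

Lemma subseq_idx (T : eqType) (x0 : T) s z :
  subseq s z -> exists l, [/\ size l = size s, sorted ltn l,
    all (fun i => 0 < i <= size z) l & map (fun j => nth x0 z j.-1) l = s].
Proof.
elim: z s => [|x z IH] s.
  by move=> /eqP -> ; exists [::].
case: s => [|c s].
  by move=> _; exists [::].
rewrite /=; case: eqP => [-> Hs|_ Hs].
- have [l [H1 H2 H3 H4]] := IH _ Hs.
  exists (1 :: map succn l); split => /=.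
  + by rewrite size_map H1.
  + rewrite path_sortedE; last exact: ltn_trans.
    apply/andP; split.
      by rewrite all_map; apply/allP => j Hj /=; have := allP H3 j Hj; lia.
    by rewrite (homo_sorted _ _ H2) // => a b; rewrite ltnS.
  + rewrite all_map; apply/allP => j Hj /=; have := allP H3 j Hj; lia.
  + rewrite -map_comp; congr (_ :: _); rewrite -H4; apply/eq_in_map => j Hj /=.
    by have := allP H3 j Hj; case: j {Hj}.
- have [l [H1 H2 H3 H4]] := IH _ Hs.
  exists (map succn l); split => /=.
  + by rewrite size_map H1.
  + by rewrite (homo_sorted _ _ H2) // => a b; rewrite ltnS.
  + rewrite all_map; apply/allP => j Hj /=; have := allP H3 j Hj; lia.
  + rewrite -map_comp -H4; apply/eq_in_map => j Hj /=.
    by have := allP H3 j Hj; case: j {Hj}.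
Qed.


Lemma matching_common z y p q : matching z y p q ->
  [/\ subseq (map (fun j => nth false z j.-1) p) z,
      subseq (map (fun j => nth false z j.-1) p) y &
      map (fun j => nth false z j.-1) p = map (fun j => nth false y j.-1) q].
Proof.
move=> [[Hs Hp Hq Hap Haq] Hn].
have E : map (fun j => nth false z j.-1) p = map (fun j => nth false y j.-1) q.
  apply: (@eq_from_nth _ false); first by rewrite !size_map.
  move=> i; rewrite size_map => Hi; rewrite !(nth_map 0) //; [exact: Hn | by rewrite -Hs].
split => //.
- by have := @idx_subseq _ false z 0 p Hp Hap; rewrite drop0.
- by rewrite E; have := @idx_subseq _ false y 0 q Hq Haq; rewrite drop0.
Qed.

Lemma matching_le z y p q : matching z y p q -> size p <= lcs z y.
Proof.
move=> /matching_common [H1 H2 _].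
by have := lcs_ge H1 H2; rewrite size_map.
Qed.

Lemma common_matching z y s : subseq s z -> subseq s y ->
  exists p q, matching z y p q /\ size p = size s.
Proof.
move=> Hz Hy; have [p [P1 P2 P3 P4]] := subseq_idx false Hz; have [q [Q1 Q2 Q3 Q4]] := subseq_idx false Hy.
exists p, q; split => //; split; first by split => //; rewrite P1 Q1.
move=> i Hi.
have := congr1 (fun s => nth false s i) (etrans P4 (esym Q4)).
rewrite (nth_map 0) // (nth_map 0) //; by rewrite Q1 -P1.
Qed.

Lemma M2_exists z y : exists p q, M2 z y p q.
Proof.
have [s [H1 H2 H3]] := lcs_attained z y.
have [p [q [Hm Hs]]] := common_matching H1 H2.
by exists p, q; split => //; rewrite Hs.
Qed.

Lemma sumn_le (p p' : seq nat) : size p' = size p ->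
  (forall i, i < size p -> nth 0 p' i <= nth 0 p i) ->
  sumn p' <= sumn p /\ (sumn p' = sumn p -> p' = p).
Proof.
elim: p p' => [|a p IH] [|a' p'] //= [Hs] H.
have H0 := H 0 erefl; rewrite /= in H0.
have [H1 H2] := IH p' Hs (fun i Hi => H i.+1 Hi).
split; first lia.
move=> E; have Ea : a' = a by lia.
have Ep : sumn p' = sumn p by lia.
by rewrite Ea (H2 Ep).
Qed.

Lemma Mmin_exists z y : exists p q, Mmin z y p q.
Proof.
have [p0 [q0 H0]] := M2_exists z y.
suff: forall N p q, M2 z y p q -> sumn p + sumn q <= N -> exists p q, Mmin z y p q.
  by move=> /(_ _ p0 q0 H0 (leqnn _)).
elim=> [|N IH] p q Hpq HN.
- exists p, q; split => // p' q' H' [S1 [S2 Hle]].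
  have Sp : size p = size q by case: Hpq => [[[]]].
  have [A1 A2] := sumn_le S1 (fun i Hi => proj1 (Hle i (ltac:(by rewrite S1)))).
  have [B1 B2] := sumn_le S2 (fun i Hi => (proj2 (Hle i (ltac:(by rewrite S1 Sp))))).
  split; [apply: A2 | apply: B2]; lia.
- destruct (classic (Mmin z y p q)) as [Hm|Hm]; first by exists p, q.
  have [p' [q' [H' Hle]]] : exists p' q', M2 z y p' q' /\ pair_le p' q' p q /\ ~ (p' = p /\ q' = q).
    apply: NNPP => Hn; apply: Hm; split => // p' q' H1 H2.
    apply: NNPP => H3; apply: Hn; by exists p', q'.
  case: Hle => [[S1 [S2 Hle]] Hne].
  have Sp : size p = size q by case: Hpq => [[[]]].
  have [A1 A2] := sumn_le S1 (fun i Hi => proj1 (Hle i (ltac:(by rewrite S1)))).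
  have [B1 B2] := sumn_le S2 (fun i Hi => (proj2 (Hle i (ltac:(by rewrite S1 Sp))))).
  apply: (IH p' q' H').
  have : sumn p' + sumn q' != sumn p + sumn q.
    apply/eqP => E; apply: Hne; split; [apply: A2 | apply: B2]; lia.
  lia.
Qed.


Lemma idx_subseq_take (T : eqType) (x0 : T) z h l :
  sorted ltn l -> all (fun i => 0 < i <= h) l -> h <= size z ->
  subseq (map (fun j => nth x0 z j.-1) l) (take h z).
Proof.
move=> Hs Ha Hh.
have Ha' : all (fun i => 0 < i <= size (take h z)) l by rewrite size_takel.
have := @idx_subseq _ x0 (take h z) 0 l Hs Ha'; rewrite drop0.
congr subseq; apply/eq_in_map => j Hj; rewrite nth_take //.
by have := allP Ha j Hj; lia.
Qed.

Lemma mem_take_nth (l : seq nat) n j : j \in take n l ->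
  exists a, [/\ a < n, a < size l & j = nth 0 l a].
Proof.
move=> /(nthP 0) [a Ha <-]; move: Ha; rewrite size_take_min => Ha.
exists a; rewrite nth_take; last by lia.
by move: Ha; rewrite leq_min => /andP [].
Qed.

Lemma mem_drop_nth (l : seq nat) n j : j \in drop n l ->
  exists a, n + a < size l /\ j = nth 0 l (n + a).
Proof.
move=> /(nthP 0) [a Ha <-]; exists a; rewrite nth_drop; split => //.
by move: Ha; rewrite size_drop ltn_subRL.
Qed.

Lemma lcs_incr z y p q i : M2 z y p q -> i.+1 < size p ->
  (nth 0 q i).+2 <= nth 0 q i.+1 ->
  lcs (ins z (nth 0 p i.+1) (nth false y (nth 0 q i))) y = (lcs z y).+1.
Proof.
move=> [Hm Hsz] Hi Hq.
apply/eqP; rewrite eqn_leq lcs_ins_le /=.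
have [_ _ E] := matching_common Hm.
case: Hm => [[Hs Hp Hq' Hap Haq] _].
have Hpl : sorted leq p by apply: sub_sorted Hp => a b /ltnW.
have Hql : sorted leq q by apply: sub_sorted Hq' => a b /ltnW.
set f := fun j => nth false z j.-1.
set g := fun j => nth false y j.-1.
set t := nth 0 p i.+1.
set u := nth 0 q i.
set b := nth false y u.
have HiQ : i.+1 < size q by rewrite -Hs.
have /= Hpi := allP Hap (nth 0 p i) (mem_nth 0 (ltnW Hi)).
have /= Hpt := allP Hap t (mem_nth 0 Hi).
have /= Hqi := allP Haq u (mem_nth 0 (ltnW HiQ)).
have /= Hqt := allP Haq (nth 0 q i.+1) (mem_nth 0 HiQ).
have Hlt : nth 0 p i < t.
  by apply: (sorted_ltn_nth ltn_trans 0 Hp) => //; rewrite ?inE /=; fsz; lia.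
set s1 := map f (take i.+1 p).
set s2 := map f (drop i.+1 p).
have Hsize : size (s1 ++ b :: s2) = (size p).+1.
  by rewrite size_cat /= !size_map size_take size_drop Hi; lia.
rewrite -Hsz -Hsize; apply: lcs_ge.
- rewrite /ins; apply: cat_subseq.
  + apply: idx_subseq_take; first exact: take_sorted.
    * apply/allP => j /mem_take_nth [a [Ha1 Ha2 ->]].
      have /= := allP Hap (nth 0 p a) (mem_nth 0 Ha2).
      have : nth 0 p a <= nth 0 p i by apply: (sorted_leq_nth leq_trans leqnn 0 Hpl) => //; rewrite ?inE /=; fsz; lia.
      fsz; lia.
    * fsz; lia.
  + rewrite /= eqxx; apply: idx_subseq.
    * exact: drop_sorted.
    * apply/allP => j /mem_drop_nth [a [Ha ->]].
      have /= := allP Hap (nth 0 p (i.+1 + a)) (mem_nth 0 Ha).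
      have : t <= nth 0 p (i.+1 + a) by apply: (sorted_leq_nth leq_trans leqnn 0 Hpl) => //; rewrite ?inE /=; fsz; lia.
      fsz; lia.
- have -> : s1 = map g (take i.+1 q) by rewrite /s1 !map_take E.
  have -> : s2 = map g (drop i.+1 q) by rewrite /s2 !map_drop E.
  rewrite -[X in subseq _ X](cat_take_drop u y) (drop_nth false); last by fsz; lia.
  apply: cat_subseq.
  + apply: idx_subseq_take; first exact: take_sorted.
    * apply/allP => j /mem_take_nth [a [Ha1 Ha2 ->]].
      have /= := allP Haq (nth 0 q a) (mem_nth 0 Ha2).
      have : nth 0 q a <= u by apply: (sorted_leq_nth leq_trans leqnn 0 Hql) => //; rewrite ?inE /=; fsz; lia.
      fsz; lia.
    * fsz; lia.
  + rewrite /= eqxx; apply: idx_subseq.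
    * exact: drop_sorted.
    * apply/allP => j /mem_drop_nth [a [Ha ->]].
      have /= := allP Haq (nth 0 q (i.+1 + a)) (mem_nth 0 Ha).
      have : nth 0 q i.+1 <= nth 0 q (i.+1 + a) by apply: (sorted_leq_nth leq_trans leqnn 0 Hql) => //; rewrite ?inE /=; fsz; lia.
      fsz; lia.
Qed.


Import GRing.Theory.

Section Upd.
Variables m n : nat.

Definition G := (bool * 'I_m.+1)%type.

Lemma set_nth_size (t : (m.+3).-tuple bool) b : size (set_nth false t m.+2 b) == m.+3.
Proof. by rewrite size_set_nth size_tuple maxnn. Qed.

Definition lastc (w : Omega m.+2 n) : G := (nth false w.1.1 m.+2, w.1.2 ord_max).

Definition upd (g : G) (w : Omega m.+2 n) : Omega m.+2 n :=
  ((Tuple (set_nth_size w.1.1 g.1),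
    [ffun i : 'I_m.+1 => if val i == m then inord (val g.2) else w.1.2 i]), w.2).

Lemma lastc_upd g w : lastc (upd g w) = g.
Proof.
case: g => b t; rewrite /lastc /upd /= nth_set_nth /= eqxx; congr (_, _).
apply: val_inj; rewrite ffunE /= eqxx /= inordK //.
Qed.

Lemma upd_lastc w : upd (lastc w) w = w.
Proof.
case: w => [[v f] y]; rewrite /upd /lastc /=; congr (_, _, _).
- apply: val_inj => /=; apply: (@eq_from_nth _ false).
    by rewrite size_set_nth size_tuple maxnn.
  move=> i _; rewrite nth_set_nth /=; case: eqP => // ->; done.
- apply/ffunP => i; rewrite ffunE; case: eqP => // Hi.
  have E : i = ord_max by apply: val_inj.
  subst i; apply: val_inj; rewrite /= inordK //.
Qed.

Lemma upd_upd g h w : upd g (upd h w) = upd g w.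
Proof.
case: w => [[v f] y]; rewrite /upd /=; congr (_, _, _).
- apply: val_inj => /=; apply: (@eq_from_nth _ false).
    by rewrite !size_set_nth size_tuple !maxnn.
  move=> i _; rewrite !nth_set_nth /=; case: eqP => // /eqP /negbTE H.
  by rewrite nth_set_nth /= H.
- apply: eq_dffun => i; rewrite !ffunE; case: eqP => //.
Qed.

Definition gadd (h g : G) : G := (addb h.1 g.1, (h.2 + g.2)%R).

Lemma gadd_inj h : injective (gadd h).
Proof.
case: h => a s [b t] [b' t'] E.
have E1 : addb a b = addb a b' := congr1 fst E.
have E2 : (s + t = s + t')%R := congr1 snd E.
by rewrite (addrI _ E2) -(addKb a b) E1 addKb.
Qed.

Lemma gadd_injl g : injective (gadd^~ g).
Proof.
case: g => a s [b t] [b' t'] E.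
have E1 : addb b a = addb b' a := congr1 fst E.
have E2 : (t + s = t' + s)%R := congr1 snd E.
by rewrite (addIr _ E2) -(addbK a b) E1 addbK.
Qed.

Definition sigm (g : G) (w : Omega m.+2 n) := upd (gadd (lastc w) g) w.

Lemma sigm_inj g : injective (sigm g).
Proof.
move=> w1 w2 E.
have E1 : lastc w1 = lastc w2.
  have := congr1 lastc E; rewrite /sigm !lastc_upd; exact: gadd_injl.
by rewrite -(upd_lastc w1) -(upd_upd _ (gadd (lastc w1) g)) -/(sigm g w1) E /sigm -E1 upd_upd E1 upd_lastc.
Qed.

Lemma count_main (B : pred (Omega m.+2 n)) :
  \sum_(w : Omega m.+2 n) #|[pred g : G | upd g w \in B]| = #|{: G}| * #|B|.
Proof.
transitivity (\sum_(w : Omega m.+2 n) \sum_(g : G) (sigm g w \in B : nat)).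
  apply: eq_bigr => w _.
  rewrite -sum1_card big_mkcond /= (reindex_inj (@gadd_inj (lastc w))) /=.
  by apply: eq_bigr => g _; rewrite inE /sigm; case: (_ \in B).
rewrite exchange_big /= -sum_nat_const; apply: eq_bigr => g _.
rewrite -sum1_card big_mkcond [RHS](reindex_inj (@sigm_inj g)) /=.
rewrite [RHS]big_mkcond; by apply: eq_bigr => w _; case: (_ \in B).
Qed.
End Upd.


Lemma Zrec_ext v v' t t' j :
  (forall i, i <= j.+2 -> v i = v' i) -> (forall i, 3 <= i <= j.+2 -> t i = t' i) ->
  Zrec v t j = Zrec v' t' j.
Proof.
elim: j => [|j IH] Hv Ht /=.
  by rewrite !Hv.
rewrite IH; first last.
- by move=> i Hi; apply: Ht; lia.
- by move=> i Hi; apply: Hv; lia.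
by rewrite Hv // Ht //; lia.
Qed.

Lemma size_ins z t b : size (ins z t b) = (size z).+1.
Proof. by rewrite /ins size_cat /= addnS -size_cat cat_take_drop. Qed.

Lemma size_Zrec v t j : size (Zrec v t j) = j.+2.
Proof. by elim: j => [|j IH] //=; rewrite size_ins IH. Qed.

Section Z.
Variables m n : nat.

Lemma Vof_upd g (w : Omega m.+2 n) i :
  Vof (upd g w) i = if i.-1 == m.+2 then g.1 else Vof w i.
Proof. by rewrite /Vof /upd /= nth_set_nth. Qed.

Lemma Tof_upd g (w : Omega m.+2 n) j : 3 <= j ->
  Tof (upd g w) j = if j == m.+3 then (val g.2).+2 else Tof w j.
Proof.
move=> Hj; rewrite /Tof /upd /=.
case: insubP => [i _ Ei|].
- rewrite ffunE; have -> : (val i == m) = (j == m.+3) by apply/eqP/eqP; lia.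
  case: (j =P m.+3) => // Ej; rewrite inordK //; rewrite Ei Ej; have := ltn_ord g.2; lia.
- move=> Hn; case: (j =P m.+3) => // Ej; exfalso; move: Hn; rewrite Ej.
  by rewrite !subSS subn0 ltnSn.
Qed.

Lemma Zof_upd_k g (w : Omega m.+2 n) : Zof (upd g w) m.+2 = Zof w m.+2.
Proof.
rewrite /Zof; apply: Zrec_ext => i Hi.
- rewrite Vof_upd; case: eqP => //; lia.
- rewrite Tof_upd; last lia. case: eqP => //; lia.
Qed.

Lemma Zof_upd_k1 g (w : Omega m.+2 n) :
  Zof (upd g w) m.+3 = ins (Zof w m.+2) (val g.2).+2 g.1.
Proof.
rewrite /Zof !subSS !subn0 /= -/(Zof _ _).
have -> : Zrec (Vof (upd g w)) (Tof (upd g w)) m = Zof (upd g w) m.+2.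
  by rewrite /Zof !subSS subn0.
rewrite Zof_upd_k Tof_upd // eqxx Vof_upd /= eqxx /Zof !subSS subn0 //.
Qed.

Lemma size_Zof (w : Omega m.+2 n) : size (Zof w m.+2) = m.+2.
Proof. by rewrite /Zof size_Zrec !subSS subn0. Qed.

End Z.


Lemma per_w m n (z y : seq bool) p q (w : Omega m.+2 n) :
  Zof w m.+2 = z -> Yof w = y -> M2 z y p q ->
  nonempty_matches q <=
  #|[pred g : G m | upd g w \in [pred w : Omega m.+2 n |
            [&& La w m.+3 == (La w m.+2).+1, Zof w m.+2 == z & Yof w == y]]]|.
Proof.
move=> Hz Hy HM.
have HM' := HM; case: HM' => [[[Hs Hp Hq Hap Haq] _] _].
have Hsz : size z = m.+2 by rewrite -Hz size_Zof.
set P := fun i => (nth 0 q i).+2 <= nth 0 q i.+1.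
set I := filter P (iota 0 (size q).-1).
set f := fun i => (nth false y (nth 0 q i), inord (nth 0 p i.+1 - 2) : 'I_m.+1).
have HI : forall i, i \in I -> [/\ i.+1 < size p, P i, 2 <= nth 0 p i.+1 & nth 0 p i.+1 <= m.+2].
  move=> i; rewrite mem_filter mem_iota => /andP [HP Hi].
  have Hi1 : i.+1 < size p by rewrite Hs; lia.
  have /= Ha1 := allP Hap _ (mem_nth 0 Hi1).
  have /= Ha0 := allP Hap _ (mem_nth 0 (ltnW Hi1)).
  have Hlt : nth 0 p i < nth 0 p i.+1.
    by apply: (sorted_ltn_nth ltn_trans 0 Hp) => //; rewrite ?inE /=; fsz; lia.
  split => //; fsz; lia.
have -> : nonempty_matches q = size (map f I) by rewrite size_map size_filter.
have Hu : uniq (map f I).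
  rewrite map_inj_in_uniq ?filter_uniq ?iota_uniq //.
  move=> i j Hi Hj E.
  have := congr1 (fun g => val g.2) E; rewrite /f /= !inordK; first last.
    by have [_ _ A B] := HI i Hi; lia.
    by have [_ _ A B] := HI j Hj; lia.
  have [Hi1 _ Hi2 _] := HI i Hi; have [Hj1 _ Hj2 _] := HI j Hj.
  move=> E2; have E3 : nth 0 p i.+1 = nth 0 p j.+1 by lia.
  case: (ltngtP i j) => // Hij.
  + have : nth 0 p i.+1 < nth 0 p j.+1.
      by apply: (sorted_ltn_nth ltn_trans 0 Hp) => //; rewrite ?inE /=; fsz; lia.
    lia.
  + have : nth 0 p j.+1 < nth 0 p i.+1.
      by apply: (sorted_ltn_nth ltn_trans 0 Hp) => //; rewrite ?inE /=; fsz; lia.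
    lia.
move/card_uniqP: Hu => <-; apply: subset_leq_card; apply/subsetP => g /mapP [i Hi ->].
have [Hi1 HPi H2 H3] := HI i Hi.
rewrite !inE /La /Yof /= -/(Yof w) Zof_upd_k Zof_upd_k1 Hz Hy !eqxx /= andbT.
rewrite /f /= inordK; last lia.
have -> : (nth 0 p i.+1 - 2).+2 = nth 0 p i.+1 by lia.
by rewrite (lcs_incr HM Hi1 HPi).
Qed.


Unset Implicit Arguments.
Import Order.TTheory GRing.Theory Num.Theory.
Local Open Scope ring_scope.

Theorem lemma12 (R : realFieldType) (n k : nat) (gamma : R) :
  0 < gamma -> (45 * n <= 100 * k)%N -> (k < n)%N -> (2 <= k)%N ->
  forall z y : seq bool,
    0 < Prob (R := R) [pred w : Omega k n | (Zof w k == z) && (Yof w == y)] ->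
    Eevent gamma n z y ->
    Prob [pred w : Omega k n |
            [&& La w k.+1 == (La w k).+1, Zof w k == z & Yof w == y]]
    >= 1 / 2 * gamma * Prob [pred w : Omega k n | (Zof w k == z) && (Yof w == y)].
Proof.
move=> Hg _ Hkn Hk2 z y HP HE.
have [m Em] : exists m, k = m.+2 by exists k.-2; lia.
subst k.
set A := [pred w : Omega m.+2 n | (Zof w m.+2 == z) && (Yof w == y)].
set B := [pred w : Omega m.+2 n | [&& La w m.+3 == (La w m.+2).+1, Zof w m.+2 == z & Yof w == y]].
have [p [q HM]] := Mmin_exists z y.
have Hc := HE p q HM.
set c := nonempty_matches q in Hc.
have Hnat : (#|A| * c <= (2 * m.+1) * #|B|)%N.
  have -> : (2 * m.+1 = #|{: G m}|)%N by rewrite card_prod card_bool card_ord.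
  rewrite -count_main -sum_nat_const.
  apply: (@leq_trans (\sum_(w in A) #|[pred g : G m | upd g w \in B]|)).
    apply: leq_sum => w; rewrite inE => /andP [/eqP Hz /eqP Hy].
    exact: (per_w Hz Hy (proj1 HM)).
  by rewrite [X in (_ <= X)%N](bigID (mem A)) /= leq_addr.
rewrite /Prob -/A -/B.
set N := #|Omega m.+2 n|.
have HN : (0 < N)%N.
  rewrite lt0n; apply/eqP => E; move: HP; rewrite /Prob -/N E invr0 mulr0 ltxx //.
have HN' : 0 < (N%:R : R) by rewrite ltr0n.
have Hr : (#|A|%:R * c%:R <= (2 * m.+1)%:R * #|B|%:R :> R).
  by rewrite -!natrM ler_nat.
have Hmn : ((m.+1)%:R <= n%:R :> R) by rewrite ler_nat; lia.
have H1 : gamma * (m.+1)%:R <= c%:R.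
  apply: le_trans (ltW Hc); by rewrite ler_pM2l.
have H2 : #|A|%:R * (gamma * (m.+1)%:R) <= #|A|%:R * (c%:R : R).
  by apply: ler_wpM2l => //; rewrite ler0n.
have H3 : (m.+1)%:R * (gamma * #|A|%:R) <= (m.+1)%:R * (2 * #|B|%:R : R).
  have : #|A|%:R * (gamma * (m.+1)%:R) <= (2 * m.+1)%:R * #|B|%:R :> R := le_trans H2 Hr.
  by rewrite natrM; congr (_ <= _); ring.
have H4 : gamma * #|A|%:R <= 2 * #|B|%:R :> R.
  by move: H3; rewrite ler_pM2l // ltr0n.
have H5 : gamma * #|A|%:R / N%:R <= 2 * #|B|%:R / N%:R :> R.
  by apply: ler_wpM2r => //; rewrite invr_ge0 ler0n.
have -> : 1 / 2 * gamma * (#|A|%:R / N%:R) = (gamma * #|A|%:R / N%:R) / 2 :> R.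
  by ring.
have -> : #|B|%:R / N%:R = (2 * #|B|%:R / N%:R) / 2 :> R.
  by field; rewrite gt_eqF.
by rewrite ler_pM2r // invr_gt0 ltr0n.
Qed.
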